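(* Let $L$ be a lattice and $\mathbf x,\mathbf y\in L^n$. If $\mathbf x$ and $\mathbf y$ are comonotone, or if they are comparable (i.e. $\mathbf x\le\mathbf y$ or $\mathbf y\le\mathbf x$ componentwise), then $\mathbf x$ and $\mathbf y$ are both g-comonotone and dually g-comonotone.
   Context: $\mathbf x,\mathbf y\in L^n$ are comonotone if for all $i,j\in\{1,\dots,n\}$: ($x_i\le x_j$ and $y_i\le y_j$) or ($x_i\ge x_j$ and $y_i\ge y_j$). They are g-comonotone if for every pair $i,j$: $(x_i\vee y_i)\wedge(x_j\vee y_j)=(x_i\wedge x_j)\vee(y_i\wedge y_j)$; dually g-comonotone if for every pair $i,j$: $(x_i\wedge y_i)\vee(x_j\wedge y_j)=(x_i\vee x_j)\wedge(y_i\vee y_j)$. *)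

(* Defs.v *)
From mathcomp Require Import all_boot all_order.
Set Implicit Arguments. Unset Strict Implicit. Unset Printing Implicit Defensive.
Import Order.Theory.
Local Open Scope order_scope.

Definition comonotone d (L : latticeType d) n (x y : 'I_n -> L) : Prop :=
  forall i j : 'I_n,
    (x i <= x j /\ y i <= y j) \/ (x j <= x i /\ y j <= y i).

Definition g_comonotone d (L : latticeType d) n (x y : 'I_n -> L) : Prop :=
  forall i j : 'I_n,
    (x i `|` y i) `&` (x j `|` y j) = (x i `&` x j) `|` (y i `&` y j).

Definition dually_g_comonotone d (L : latticeType d) n (x y : 'I_n -> L) : Prop :=
  forall i j : 'I_n,
    (x i `&` y i) `|` (x j `&` y j) = (x i `|` x j) `&` (y i `|` y j).

Definition vle d (L : latticeType d) n (x y : 'I_n -> L) : Prop :=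
  forall i : 'I_n, x i <= y i.

(* Main.v *)
Require Import Defs.
From mathcomp Require Import all_boot all_order.
Import Order.Theory.
Local Open Scope order_scope.

Theorem lemma1 (d : Order.disp_t) (L : latticeType d) (n : nat) (x y : 'I_n -> L) :
  (comonotone x y \/ vle x y \/ vle y x) ->
  g_comonotone x y /\ dually_g_comonotone x y.
Proof.
case=> [H|[H|H]]; split=> i j.
- case: (H i j) => [[a b]|[a b]].
  + by rewrite (meet_l (leU2 a b)) (meet_l a) (meet_l b).
  + by rewrite (meet_r (leU2 a b)) (meet_r a) (meet_r b).
- case: (H i j) => [[a b]|[a b]].
  + by rewrite (join_r (leI2 a b)) (join_r a) (join_r b).
  + by rewrite (join_l (leI2 a b)) (join_l a) (join_l b).
- by rewrite (join_r (H i)) (join_r (H j)) (join_r (leI2 (H i) (H j))).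
- by rewrite (meet_l (H i)) (meet_l (H j)) (meet_l (leU2 (H i) (H j))).
- by rewrite (join_l (H i)) (join_l (H j)) (join_l (leI2 (H i) (H j))).
- by rewrite (meet_r (H i)) (meet_r (H j)) (meet_r (leU2 (H i) (H j))).
Qed.
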